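(* Let $m\ge n\ge3$ be integers. If $Q\in\mathfrak{C}^0_{(m)}$, then $Q\in\mathfrak{C}^0_{(n)}$. If $Q\in\mathfrak{C}^{0,\alpha}_{(m)}$, then $Q\in\mathfrak{C}^{0,\alpha}_{(n)}$.
   Context: Fix $\mathsf{a}>0$, $\Xi_0>0$, $R_0=\mathsf{a}\Xi_0$, and $\alpha\in(0,1)$. For integer $n\ge3$ and $\Xi>0$, $B^{(n)}(\Xi)$ is the open ball of radius $\Xi$ in $\mathbb{R}^n$. For $f$ on $\bar B^{(n)}(\Xi)$: $\|f;C^0\|=\sup|f|$ and $\|f;C^{0,\alpha}\|=\sup|f|+\sup\{|f(\xi')-f(\xi)|/|\xi'-\xi|^\alpha:\ \xi,\xi'\in\bar B^{(n)}(\Xi),\ 0<|\xi'-\xi|\le1\}$. For a function $Q$ of $(\varpi,z)$, $\varpi\ge0$, set $Q^{\flat(n)}(\xi)=Q(\mathsf{a}\sqrt{\xi_1^2+\dots+\xi_{n-1}^2},\mathsf{a}\xi_n)$, and $r=\sqrt{\varpi^2+z^2}$. Kelvin transform: $\xi^\star=(\Xi_0/|\xi|)^2\xi$, $f_{\star(n)}(\xi^\star)=(|\xi|/\Xi_0)^{n-2}f(\xi)$. $\mathfrak{C}^{0}(\bar{\mathfrak{D}}(R))$ (resp. $\mathfrak{C}^{0,\alpha}(\bar{\mathfrak{D}}(R))$): continuous $Q$ on $\{r\le R\}$, even in $z$, with $Q^{\flat(n)}\in C^0(\bar B^{(n)}(R/\mathsf{a}))$ (resp. $C^{0,\alpha}$),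 norm that of $Q^{\flat(n)}$ (independent of $n$). $\mathfrak{C}^0_{(n)}(\overline{\mathfrak{D}^{c}}(R_0))$ (resp. $\mathfrak{C}^{0,\alpha}_{(n)}(\overline{\mathfrak{D}^{c}}(R_0))$): $Q$ on $\{r\ge R_0\}$, even in $z$, such that $(Q^{\flat(n)})_{\star(n)}$ on $\bar B^{(n)}(\Xi_0)\setminus\{0\}$ is the restriction of some $F\in C^0(\bar B^{(n)}(\Xi_0))$ (resp. $C^{0,\alpha}$); norm that of $F$. Cut-off $\chi\in C^\infty(\mathbb{R})$ with $\chi(t)=1$ for $t\le1$, $0<\chi<1$ on $(1,2)$, $\chi(t)=0$ for $t\ge2$; $Q^{[0]}=\chi(r/R_0)Q$, $Q^{[\infty]}=(1-\chi(r/R_0))Q$. $\mathfrak{C}^0_{(n)}$ (resp. $\mathfrak{C}^{0,\alpha}_{(n)}$): $Q$ even in $z$ with $Q^{[0]}\in\mathfrak{C}^0(\bar{\mathfrak{D}}(2R_0))$ and $Q^{[\infty]}\in\mathfrak{C}^0_{(n)}(\overline{\mathfrak{D}^c}(R_0))$ (resp. with $0,\alpha$), norm the maximum of the two norms. *)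

(* Defs.v *)
From HB Require Import structures.
From mathcomp Require Import all_boot all_order all_algebra.
From mathcomp Require Import all_classical all_reals all_analysis.
Unset Printing Implicit Defensive.
Import Order.TTheory GRing.Theory Num.Theory.
Import numFieldNormedType.Exports.
Local Open Scope ring_scope.

Section Spaces.
Variable R : realType.

Definition enorm (n : nat) (xi : 'I_n -> R) : R := Num.sqrt (\sum_(i < n) xi i ^+ 2).
Definition edist (n : nat) (xi eta : 'I_n -> R) : R := enorm n (fun i => xi i - eta i).
(* k-th coordinate (0-based), 0 if k >= n *)
Definition coord (n : nat) (xi : 'I_n -> R) (k : nat) : R :=
  if @insub nat (fun k => k < n)%N 'I_n k is Some i then xi i else 0.

Definition inball (n : nat) (Xi : R) (xi : 'I_n -> R) : Prop := enorm n xi <= Xi.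

Definition C0ball (n : nat) (Xi : R) (f : ('I_n -> R) -> R) : Prop :=
  (forall xi, inball n Xi xi -> forall e, 0 < e -> exists2 d, 0 < d &
     forall eta, inball n Xi eta -> edist n eta xi < d -> `|f eta - f xi| < e) /\
  (exists M, forall xi, inball n Xi xi -> `|f xi| <= M).

Definition C0aball (alpha : R) (n : nat) (Xi : R) (f : ('I_n -> R) -> R) : Prop :=
  C0ball n Xi f /\
  (exists C, forall xi xi', inball n Xi xi -> inball n Xi xi' ->
     0 < edist n xi' xi <= 1 -> `|f xi' - f xi| <= C * (edist n xi' xi `^ alpha)).

Definition rr (w z : R) : R := Num.sqrt (w ^+ 2 + z ^+ 2).

Definition flat (a : R) (n : nat) (Q : R -> R -> R) (xi : 'I_n -> R) : R :=
  Q (a * Num.sqrt (\sum_(k < n.-1) coord n xi k ^+ 2)) (a * coord n xi n.-1).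

Definition kpt (Xi0 : R) (n : nat) (xi : 'I_n -> R) : 'I_n -> R :=
  fun i => (Xi0 / enorm n xi) ^+ 2 * xi i.

Definition regularity := forall n : nat, R -> (('I_n -> R) -> R) -> Prop.

Definition Cint (reg : regularity) (a : R) (n : nat) (Rr : R) (Q : R -> R -> R) : Prop :=
  (forall w z, 0 <= w -> rr w z <= Rr -> Q w (- z) = Q w z) /\
  (forall w z, 0 <= w -> rr w z <= Rr -> forall e, 0 < e -> exists2 d, 0 < d &
     forall w' z', 0 <= w' -> rr w' z' <= Rr -> rr (w' - w) (z' - z) < d ->
       `|Q w' z' - Q w z| < e) /\
  reg n (Rr / a) (flat a n Q).

(* frak C^{...}_{(n)}(\bar{D^c}(R0)), R0 = a Xi0 *)
Definition Cext (reg : regularity) (a Xi0 : R) (n : nat) (Q : R -> R -> R) : Prop :=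
  (forall w z, 0 <= w -> a * Xi0 <= rr w z -> Q w (- z) = Q w z) /\
  exists F : ('I_n -> R) -> R, reg n Xi0 F /\
    (forall xi, Xi0 <= enorm n xi ->
       F (kpt Xi0 n xi) = (enorm n xi / Xi0) ^+ (n - 2) * flat a n Q xi).

Definition Cfull (reg : regularity) (a Xi0 : R) (chi : R -> R) (n : nat)
    (Q : R -> R -> R) : Prop :=
  (forall w z, 0 <= w -> Q w (- z) = Q w z) /\
  Cint reg a n (2 * (a * Xi0)) (fun w z => chi (rr w z / (a * Xi0)) * Q w z) /\
  Cext reg a Xi0 n (fun w z => (1 - chi (rr w z / (a * Xi0))) * Q w z).

Definition C0 (a Xi0 : R) (chi : R -> R) (n : nat) (Q : R -> R -> R) : Prop :=
  Cfull C0ball a Xi0 chi n Q.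
Definition C0a (alpha a Xi0 : R) (chi : R -> R) (n : nat) (Q : R -> R -> R) : Prop :=
  Cfull (C0aball alpha) a Xi0 chi n Q.

Definition is_cutoff (chi : R -> R) : Prop :=
  (forall k x, derivable (derive1n k chi) x 1) /\
  (forall t, t <= 1 -> chi t = 1) /\
  (forall t, 1 < t < 2 -> 0 < chi t < 1) /\
  (forall t, 2 <= t -> chi t = 0).

End Spaces.

(* Main.v *)
Require Import Defs.
From HB Require Import structures.
From mathcomp Require Import all_boot all_order all_algebra.
From mathcomp Require Import all_classical all_reals all_analysis.
From mathcomp Require Import lra ring zify.
Import Order.TTheory GRing.Theory Num.Theory.
Local Open Scope ring_scope.
Set Implicit Arguments. Unset Strict Implicit.

Section Aux.
Variable R : realType.

Lemma sq_le (x y : R) : 0 <= y -> x ^+ 2 <= y ^+ 2 -> x <= y.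
Proof. move=> y0 h; nra. Qed.

Lemma mink_step (A B C a b : R) : 0 <= A -> 0 <= B -> 0 <= C ->
  Num.sqrt C <= Num.sqrt A + Num.sqrt B ->
  Num.sqrt (C + (a + b) ^+ 2) <= Num.sqrt (A + a ^+ 2) + Num.sqrt (B + b ^+ 2).
Proof.
move=> A0 B0 C0 hC.
have hs := sqr_sqrtr (addr_ge0 A0 (sqr_ge0 a)).
have ht := sqr_sqrtr (addr_ge0 B0 (sqr_ge0 b)).
have hu := sqr_sqrtr A0. have hv := sqr_sqrtr B0. have hw := sqr_sqrtr C0.
have s0 := sqrtr_ge0 (A + a ^+ 2). have t0 := sqrtr_ge0 (B + b ^+ 2).
have u0 := sqrtr_ge0 A. have v0 := sqrtr_ge0 B. have w0 := sqrtr_ge0 C.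
set s := Num.sqrt (A + a ^+ 2) in hs s0 *.
set t := Num.sqrt (B + b ^+ 2) in ht t0 *.
set u := Num.sqrt A in hu u0 hC. set v := Num.sqrt B in hv v0 hC.
set w := Num.sqrt C in hw w0 hC.
have key : u * v + a * b <= s * t.
  apply: sq_le; first exact: mulr_ge0.
  rewrite exprMn hs ht -hu -hv; have := sqr_ge0 (u * b - a * v); nra.
apply: sq_le; first exact: addr_ge0.
rewrite sqr_sqrtr; last by apply: addr_ge0 => //; exact: sqr_ge0.
have : w ^+ 2 <= (u + v) ^+ 2 by nra.
rewrite hw => hC2.
clearbody s t u v w.
have E1 : (s + t) ^+ 2 = A + a ^+ 2 + (B + b ^+ 2) + 2 * (s * t) by rewrite -hs -ht; ring.
have E2 : (u + v) ^+ 2 = A + B + 2 * (u * v) by rewrite -hu -hv; ring.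
have E3 : (a + b) ^+ 2 = a ^+ 2 + b ^+ 2 + 2 * (a * b) by ring.
rewrite E1 E3; rewrite E2 in hC2; lra.
Qed.

Lemma mink (f g : nat -> R) k :
  Num.sqrt (\sum_(i < k) (f i + g i) ^+ 2) <=
  Num.sqrt (\sum_(i < k) f i ^+ 2) + Num.sqrt (\sum_(i < k) g i ^+ 2).
Proof.
elim: k => [|k IH]; first by rewrite !big_ord0 sqrtr0 addr0.
rewrite !big_ord_recr /=; apply: mink_step => //;
  by apply: sumr_ge0 => i _; exact: sqr_ge0.
Qed.


Local Notation coord := (Defs.coord R).
Local Notation enorm := (Defs.enorm R).
Local Notation edist := (Defs.edist R).
Local Notation inball := (Defs.inball R).
Local Notation kpt := (Defs.kpt R).
Local Notation flat := (Defs.flat R).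

Lemma coord_ord n (xi : 'I_n -> R) (i : 'I_n) : coord n xi i = xi i.
Proof. by rewrite /coord eqtype.valK. Qed.

Lemma coord_lt n (xi : 'I_n -> R) k (h : (k < n)%N) : coord n xi k = xi (Ordinal h).
Proof. by rewrite -coord_ord. Qed.

Lemma coord_ge n (xi : 'I_n -> R) k : (n <= k)%N -> coord n xi k = 0.
Proof. by move=> h; rewrite /coord insubF // ltnNge h. Qed.

Lemma coordB n (x y : 'I_n -> R) k :
  coord n (fun i => x i - y i) k = coord n x k - coord n y k.
Proof. by rewrite /coord; case: insub => //; rewrite subr0. Qed.

Lemma coordZ n (x : 'I_n -> R) c k :
  coord n (fun i => c * x i) k = c * coord n x k.
Proof. by rewrite /coord; case: insub => //; rewrite mulr0. Qed.

Lemma enorm_ge0 n (x : 'I_n -> R) : 0 <= enorm n x.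
Proof. exact: sqrtr_ge0. Qed.

Lemma enormD n (x y : 'I_n -> R) :
  enorm n (fun i => x i + y i) <= enorm n x + enorm n y.
Proof.
rewrite /enorm.
have -> : \sum_(i < n) (x i + y i) ^+ 2 =
   \sum_(i < n) (coord n x i + coord n y i) ^+ 2.
  by apply: eq_bigr => i _; rewrite !coord_ord.
have -> : \sum_(i < n) x i ^+ 2 = \sum_(i < n) coord n x i ^+ 2.
  by apply: eq_bigr => i _; rewrite !coord_ord.
have -> : \sum_(i < n) y i ^+ 2 = \sum_(i < n) coord n y i ^+ 2.
  by apply: eq_bigr => i _; rewrite !coord_ord.
exact: mink.
Qed.

Lemma edistC n (x y : 'I_n -> R) : edist n x y = edist n y x.
Proof.
rewrite /edist /enorm; congr Num.sqrt; apply: eq_bigr => i _.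
by rewrite -opprB sqrrN.
Qed.

Lemma edist_ge0 n (x y : 'I_n -> R) : 0 <= edist n x y.
Proof. exact: sqrtr_ge0. Qed.

Lemma enorm_lip n (x y : 'I_n -> R) : `|enorm n x - enorm n y| <= edist n x y.
Proof.
have h1 : enorm n x <= enorm n y + edist n x y.
  have := enormD y (fun i => x i - y i).
  by have -> : (fun i => y i + (x i - y i)) = x by apply: funext => i; rewrite addrC subrK.
have h2 : enorm n y <= enorm n x + edist n x y.
  have := enormD x (fun i => y i - x i); rewrite -/(edist n y x) edistC.
  by have -> : (fun i => x i + (y i - x i)) = y by apply: funext => i; rewrite addrC subrK.
rewrite ler_norml; apply/andP; split; lra.
Qed.

Lemma enormZ n (x : 'I_n -> R) c :
  enorm n (fun i => c * x i) = `|c| * enorm n x.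
Proof.
rewrite /enorm.
have -> : \sum_(i < n) (c * x i) ^+ 2 = c ^+ 2 * \sum_(i < n) x i ^+ 2.
  by rewrite mulr_sumr; apply: eq_bigr => i _; rewrite exprMn.
by rewrite sqrtrM ?sqr_ge0 // sqrtr_sqr.
Qed.

Definition S_ n (xi : 'I_n -> R) := \sum_(k < n.-1) coord n xi k ^+ 2.

Lemma S_ge0 n (xi : 'I_n -> R) : 0 <= S_ xi.
Proof. by apply: sumr_ge0 => i _; exact: sqr_ge0. Qed.

Lemma enorm_split n (xi : 'I_n -> R) : (0 < n)%N ->
  enorm n xi = Num.sqrt (S_ xi + coord n xi n.-1 ^+ 2).
Proof.
case: n xi => // n xi _; rewrite /enorm /S_ big_ord_recr /=.
congr (Num.sqrt (_ + _)); last by rewrite -(coord_ord xi ord_max).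
by apply: eq_bigr => i _; rewrite -(coord_ord xi (widen_ord _ i)).
Qed.


Definition embedN n m (xi : 'I_n -> R) (k : nat) : R :=
  if (k < n.-1)%N then coord n xi k else if k == m.-1 then coord n xi n.-1 else 0.
Definition embed n m (xi : 'I_n -> R) : 'I_m -> R := fun j => embedN m xi j.
Arguments embed {n} m xi _.

Lemma coord_embed n m (xi : 'I_n -> R) k : (k < m)%N ->
  coord m (embed m xi) k = embedN m xi k.
Proof. by move=> h; rewrite (coord_lt _ h). Qed.

Lemma S_embed n m (xi : 'I_n -> R) : (0 < n)%N -> (n <= m)%N ->
  S_ (embed m xi) = S_ xi.
Proof.
move=> n0 nm; rewrite /S_.
have m0 : (0 < m)%N by apply: leq_trans nm.
have hle : (n.-1 <= m.-1)%N by rewrite -!subn1 leq_sub2r.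
transitivity (\sum_(k < m.-1) embedN m xi k ^+ 2).
  apply: eq_bigr => k _; rewrite coord_embed //.
  by apply: leq_trans (ltn_ord k) _; rewrite leq_pred.
rewrite -(big_mkord xpredT (fun k => embedN m xi k ^+ 2)).
rewrite (big_cat_nat (leq0n _) hle) /=.
rewrite [X in _ + X](_ : _ = 0) ?addr0; last first.
  rewrite big_nat_cond big1 // => k /andP[/andP[hk1 hk2] _].
  by rewrite /embedN ltnNge hk1 /= (ltn_eqF hk2) expr2 mulr0.
rewrite big_mkord; apply: eq_bigr => k _.
by rewrite /embedN ltn_ord.
Qed.

Lemma c_embed n m (xi : 'I_n -> R) : (0 < n)%N -> (n <= m)%N ->
  coord m (embed m xi) m.-1 = coord n xi n.-1.
Proof.
move=> n0 nm.
have m0 : (0 < m)%N by apply: leq_trans nm.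
have hle : (n.-1 <= m.-1)%N by rewrite -!subn1 leq_sub2r.
rewrite coord_embed; last by rewrite prednK.
by rewrite /embedN ltnNge hle /= eqxx.
Qed.

Lemma enorm_embed n m (xi : 'I_n -> R) : (0 < n)%N -> (n <= m)%N ->
  enorm m (embed m xi) = enorm n xi.
Proof.
move=> n0 nm; have m0 : (0 < m)%N by apply: leq_trans nm.
by rewrite !enorm_split // S_embed // c_embed.
Qed.

Lemma flat_embed a n m Q (xi : 'I_n -> R) : (0 < n)%N -> (n <= m)%N ->
  flat a m Q (embed m xi) = flat a n Q xi.
Proof.
move=> n0 nm; rewrite /flat -/(S_ (embed m xi)) -/(S_ xi).
by rewrite S_embed // c_embed.
Qed.

Lemma embedB n m (x y : 'I_n -> R) :
  (fun j => embed m x j - embed m y j) = embed m (fun i => x i - y i).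
Proof.
apply: funext => j; rewrite /embed /embedN !coordB.
by case: ifP => _ //; case: ifP => _ //; rewrite subr0.
Qed.

Lemma embedZ n m (x : 'I_n -> R) c :
  (fun j => c * embed m x j) = embed m (fun i => c * x i).
Proof.
apply: funext => j; rewrite /embed /embedN !coordZ.
by case: ifP => _ //; case: ifP => _ //; rewrite mulr0.
Qed.

Lemma edist_embed n m (x y : 'I_n -> R) : (0 < n)%N -> (n <= m)%N ->
  edist m (embed m x) (embed m y) = edist n x y.
Proof. by move=> n0 nm; rewrite /Defs.edist embedB enorm_embed. Qed.

Lemma kpt_embed Xi0 n m (x : 'I_n -> R) : (0 < n)%N -> (n <= m)%N ->
  embed m (kpt Xi0 n x) = kpt Xi0 m (embed m x).
Proof.
by move=> n0 nm; rewrite /Defs.kpt enorm_embed // -embedZ.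
Qed.


Local Notation C0ball := (Defs.C0ball R).
Local Notation C0aball := (Defs.C0aball R).

Lemma inball_embed n m X (xi : 'I_n -> R) : (0 < n)%N -> (n <= m)%N ->
  inball n X xi -> inball m X (embed m xi).
Proof. by move=> n0 nm; rewrite /Defs.inball enorm_embed. Qed.

Lemma C0ball_embed n m X F : (0 < n)%N -> (n <= m)%N ->
  C0ball m X F -> C0ball n X (fun xi => F (embed m xi)).
Proof.
move=> n0 nm [Hc [M HM]]; split; last first.
  by exists M => xi hxi; apply: HM; exact: inball_embed.
move=> xi hxi e e0; have [d d0 Hd] := Hc _ (inball_embed n0 nm hxi) e e0.
exists d => // eta heta hd; apply: Hd; first exact: inball_embed.
by rewrite edist_embed.
Qed.

Lemma C0aball_embed alpha n m X F : (0 < n)%N -> (n <= m)%N ->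
  C0aball alpha m X F -> C0aball alpha n X (fun xi => F (embed m xi)).
Proof.
move=> n0 nm [H0 [C HC]]; split; first exact: C0ball_embed.
exists C => xi xi' h1 h2; rewrite -(edist_embed (m:=m)) // => hd.
by apply: HC => //; exact: inball_embed.
Qed.

Lemma pow_lip (u v : R) k : 0 <= u <= 1 -> 0 <= v <= 1 ->
  `|u ^+ k - v ^+ k| <= k%:R * `|u - v|.
Proof.
move=> /andP[u0 u1] /andP[v0 v1]; elim: k => [|k IH].
  by rewrite !expr0 subrr normr0 mul0r.
have -> : u ^+ k.+1 - v ^+ k.+1 = u * (u ^+ k - v ^+ k) + v ^+ k * (u - v).
  by rewrite !exprS; ring.
apply: (le_trans (ler_normD _ _)); rewrite !normrM.
have hu : `|u| <= 1 by rewrite ger0_norm.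
have hv : `|v ^+ k| <= 1 by rewrite ger0_norm ?exprn_ge0 //; exact: exprn_ile1.
have n1 := normr_ge0 (u ^+ k - v ^+ k). have n2 := normr_ge0 (u - v).
have n3 := normr_ge0 u. have n4 := normr_ge0 (v ^+ k).
rewrite -natr1 mulrDl mul1r; nra.
Qed.

Definition gfac (Xi0 : R) n k (x : 'I_n -> R) := (enorm n x / Xi0) ^+ k.

Lemma gfac_bnd Xi0 n k (x : 'I_n -> R) : 0 < Xi0 -> inball n Xi0 x ->
  0 <= gfac Xi0 k x <= 1.
Proof.
move=> X0 hx; rewrite /gfac.
have h0 : 0 <= enorm n x / Xi0 by rewrite divr_ge0 ?enorm_ge0 ?ltW.
have h1 : enorm n x / Xi0 <= 1.
  rewrite ler_pdivrMr // mul1r; exact: hx.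
by rewrite exprn_ge0 //= exprn_ile1.
Qed.

Lemma gfac_lip Xi0 n k (x y : 'I_n -> R) : 0 < Xi0 -> inball n Xi0 x ->
  inball n Xi0 y ->
  `|gfac Xi0 k x - gfac Xi0 k y| <= (k%:R / Xi0) * edist n x y.
Proof.
move=> X0 hx hy; rewrite /gfac.
have b z : inball n Xi0 z -> 0 <= enorm n z / Xi0 <= 1.
  move=> hz; apply/andP; split; first by rewrite divr_ge0 ?enorm_ge0 ?ltW.
  rewrite ler_pdivrMr // mul1r; exact: hz.
apply: (le_trans (pow_lip _ (b _ hx) (b _ hy))).
rewrite -mulrBl normrM (@gtr0_norm _ Xi0^-1); last by rewrite invr_gt0.
rewrite mulrA [X in _ <= X]mulrAC; apply: ler_wpM2r.
  by rewrite invr_ge0 ltW.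
by apply: ler_wpM2l; [exact: ler0n | exact: enorm_lip].
Qed.


Lemma norm_prod (a b c d : R) :
  `|a * b - c * d| <= `|a| * `|b - d| + `|a - c| * `|d|.
Proof.
have -> : a * b - c * d = a * (b - d) + (a - c) * d by ring.
by apply: (le_trans (ler_normD _ _)); rewrite !normrM.
Qed.

Lemma C0ball_mul Xi0 n k F : 0 < Xi0 ->
  C0ball n Xi0 F -> C0ball n Xi0 (fun x => gfac Xi0 k x * F x).
Proof.
move=> X0 [Hc [M HM]].
have HM' : forall x, inball n Xi0 x -> `|F x| <= `|M| + 1.
  move=> x hx; apply: (le_trans (HM x hx)); apply: (le_trans (ler_norm M)); lra.
have M'0 : 0 < `|M| + 1 by have := normr_ge0 M; lra.
set M' := `|M| + 1 in HM' M'0.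
set L := k%:R / Xi0.
have L0 : 0 <= L by rewrite divr_ge0 ?ler0n ?ltW.
split; last first.
  exists M => x hx; rewrite normrM.
  have /andP[g0 g1] := gfac_bnd k X0 hx.
  have := HM x hx; have := normr_ge0 (F x).
  rewrite ger0_norm //; nra.
move=> xi hxi e e0.
have e20 : 0 < e / 2 by rewrite divr_gt0.
have [d1 d10 Hd1] := Hc xi hxi (e / 2) e20.
set K := (L + 1) * M'.
have K0 : 0 < K by rewrite mulr_gt0 //; lra.
set d2 := e / 2 / K.
have d20 : 0 < d2 by rewrite divr_gt0.
have Kd2 : K * d2 = e / 2 by rewrite /d2 mulrC divfK // gt_eqF.
exists (Num.min d1 d2); first by rewrite lt_min d10 d20.
move=> eta heta; rewrite lt_min => /andP[hd1 hd2].
apply: (le_lt_trans (norm_prod _ _ _ _)).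
have /andP[g0 g1] := gfac_bnd k X0 heta.
have hA := Hd1 eta heta hd1.
have hB := gfac_lip k X0 heta hxi.
have hF := HM' xi hxi.
set dd := edist n eta xi in hd1 hd2 hA hB.
have dd0 : 0 <= dd := edist_ge0 _ _.
have nA := normr_ge0 (F eta - F xi).
have nF := normr_ge0 (F xi).
have nB := normr_ge0 (gfac Xi0 k eta - gfac Xi0 k xi).
have h1 : `|gfac Xi0 k eta| * `|F eta - F xi| <= `|F eta - F xi|.
  rewrite ger0_norm //; nra.
have h2 : `|gfac Xi0 k eta - gfac Xi0 k xi| * `|F xi| <= (L * dd) * M'.
  by apply: ler_pM.
have h3 : K * dd = L * dd * M' + dd * M' by rewrite /K; ring.
have h4 : 0 <= dd * M' by rewrite mulr_ge0 // ltW.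
have h5 : K * dd < K * d2 by rewrite ltr_pM2l.
lra.
Qed.

Lemma C0aball_mul alpha Xi0 n k F : 0 < Xi0 -> 0 < alpha -> alpha <= 1 ->
  C0aball alpha n Xi0 F -> C0aball alpha n Xi0 (fun x => gfac Xi0 k x * F x).
Proof.
move=> X0 a0 a1 [H0 [C HC]]; split; first exact: C0ball_mul.
have [_ [M HM]] := H0.
have HM' : forall x, inball n Xi0 x -> `|F x| <= `|M| + 1.
  move=> x hx; apply: (le_trans (HM x hx)); apply: (le_trans (ler_norm M)); lra.
have M'0 : 0 < `|M| + 1 by have := normr_ge0 M; lra.
set M' := `|M| + 1 in HM' M'0.
set L := k%:R / Xi0.
have L0 : 0 <= L by rewrite divr_ge0 ?ler0n ?ltW.
exists (C + L * M') => xi xi' h1 h2 /andP[dd0 dd1].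
apply: (le_trans (norm_prod _ _ _ _)).
have /andP[g0 g1] := gfac_bnd k X0 h2.
have hA := HC xi xi' h1 h2 (introT andP (conj dd0 dd1)).
have hB := gfac_lip k X0 h2 h1.
have hF := HM' xi h1.
set dd := edist n xi' xi in dd0 dd1 hA hB *.
have hp : dd <= dd `^ alpha by apply: ger1_powR => //; rewrite dd0 dd1.
set pa := dd `^ alpha in hA hp *.
have nA := normr_ge0 (F xi' - F xi).
have nF := normr_ge0 (F xi).
have h1' : `|gfac Xi0 k xi'| * `|F xi' - F xi| <= `|F xi' - F xi|.
  rewrite ger0_norm //; nra.
have h2' : `|gfac Xi0 k xi' - gfac Xi0 k xi| * `|F xi| <= (L * dd) * M'.
  by apply: ler_pM => //; exact: normr_ge0.
have h3 : L * dd * M' <= L * pa * M'.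
  apply: ler_wpM2r; first exact: ltW.
  exact: ler_wpM2l.
have -> : (C + L * M') * pa = C * pa + L * pa * M' by ring.
lra.
Qed.


Lemma transfer (reg : Defs.regularity R) a Xi0 chi n m Q :
  0 < a -> 0 < Xi0 -> (2 <= n)%N -> (n <= m)%N ->
  (forall X F, reg m X F -> reg n X (fun xi => F (embed m xi))) ->
  (forall k F, reg n Xi0 F -> reg n Xi0 (fun x => gfac Xi0 k x * F x)) ->
  Defs.Cfull R reg a Xi0 chi m Q -> Defs.Cfull R reg a Xi0 chi n Q.
Proof.
move=> a0 X0 n2 nm Hemb Hmul [Hev [[Hi1 [Hi2 Hi3]] [He1 [F [HF HFk]]]]].
have n0 : (0 < n)%N by apply: leq_trans n2.
have E Q' : flat a n Q' = (fun xi => flat a m Q' (embed m xi)).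
  by apply: funext => xi; rewrite flat_embed.
split=> //; split; first by split=> //; split=> //; rewrite E; exact: Hemb.
split=> //.
exists (fun x => gfac Xi0 (m - n) x * F (embed m x)); split.
  by apply: Hmul; exact: Hemb.
move=> xi hxi.
rewrite kpt_embed // HFk; last by rewrite enorm_embed.
rewrite enorm_embed // flat_embed // mulrA; congr (_ * _).
have N0 : 0 < enorm n xi by apply: lt_le_trans hxi.
rewrite /gfac /Defs.kpt enormZ ger0_norm ?sqr_ge0 //.
have -> : (m - 2 = (m - n) + (n - 2))%N by lia.
rewrite exprD mulrA -exprMn.
have -> : (Xi0 / enorm n xi) ^+ 2 * enorm n xi / Xi0 * (enorm n xi / Xi0) = 1.
  by field; rewrite ?gt_eqF.
by rewrite expr1n mul1r.
Qed.

End Aux.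

Theorem proposition9 (R : realType) (a Xi0 alpha : R) (chi : R -> R)
    (m n : nat) (Q : R -> R -> R) :
  0 < a -> 0 < Xi0 -> 0 < alpha < 1 -> @is_cutoff R chi ->
  (3 <= n)%N -> (n <= m)%N ->
  (@C0 R a Xi0 chi m Q -> @C0 R a Xi0 chi n Q) /\
  (@C0a R alpha a Xi0 chi m Q -> @C0a R alpha a Xi0 chi n Q).
Proof.
move=> a0 X0 /andP[al0 al1] _ n3 nm.
have n2 : (2 <= n)%N by apply: ltnW.
have n0 : (0 < n)%N by apply: leq_trans n2.
split.
- apply: transfer => //.
  + by move=> X F; exact: C0ball_embed.
  + by move=> k F; exact: C0ball_mul.
- apply: transfer => //.
  + by move=> X F; exact: C0aball_embed.
  + by move=> k F; apply: C0aball_mul => //; exact: ltW.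
Qed.
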